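(* Let $A$ be a finite alphabet. If $\phi: A^{\mathbb{N}} \to A^{\mathbb{N}}$ $*$-commutes with the shift map $\sigma$, then $Z_k^{\phi}$ is shift invariant, i.e. $\sigma(Z_k^{\phi})=Z_k^{\phi}$, for all $k \in \mathbb{N}$.
   Context: $A$ is a finite set; $\mathbb{N}=\{1,2,3,\dots\}$; $A^{\mathbb{N}}$ is the set of one-sided infinite sequences over $A$; $\sigma(x_1x_2x_3\cdots)=x_2x_3\cdots$. Two functions $S,T: X\to X$ $*$-commute if $ST=TS$ and for every $(y,z)\in X\times X$ with $S(y)=T(z)$ there exists a unique $x\in X$ with $T(x)=y$ and $S(x)=z$. For $\phi: X\to X$ and $k\in\mathbb{N}$, $Z_k^{\phi}=\{y\in X : |\phi^{-1}(y)|=k\}$. *)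

(* Defs.v *)
From mathcomp Require Import all_boot.
Set Implicit Arguments. Unset Strict Implicit. Unset Printing Implicit Defensive.

(* One-sided sequences over A: x_1 x_2 x_3 ... is represented as
   fun n => x_{n+1}, i.e. index 0 of the Rocq function is the first letter. *)
Definition seqs (A : Type) := nat -> A.

Definition shift (A : Type) (x : seqs A) : seqs A := fun n => x n.+1.

Definition star_commute (X : Type) (S T : X -> X) : Prop :=
  (forall x, S (T x) = T (S x)) /\
  (forall y z, S y = T z ->
     exists x, (T x = y /\ S x = z) /\
       forall x', T x' = y /\ S x' = z -> x' = x).

Definition has_card (X : Type) (P : X -> Prop) (k : nat) : Prop :=
  exists f : 'I_k -> X, injective f /\ (forall x, P x <-> exists i, f i = x).

Definition Zk (X : Type) (phi : X -> X) (k : nat) (y : X) : Prop :=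
  has_card (fun x => phi x = y) k.

(* Main.v *)
Require Import Defs.
From mathcomp Require Import all_boot.
From Stdlib Require Import ClassicalEpsilon.

Lemma fwd (A : finType) (phi : seqs A -> seqs A) k w :
  star_commute phi (@shift A) -> Zk phi k w -> Zk phi k (shift w).
Proof.
move=> [Hc Hu] [f [finj fP]].
exists (fun i => shift (f i)); split.
- move=> i j Eij.
  have pi : phi (f i) = w by apply/fP; exists i.
  have pj : phi (f j) = w by apply/fP; exists j.
  have Hs : phi (shift (f i)) = shift w by rewrite Hc pi.
  have [x [_ Ux]] := Hu _ _ Hs.
  apply: finj.
  have e1 := Ux (f i) (conj erefl pi).
  have e2 := Ux (f j) (conj (esym Eij) pj).
  by rewrite e1 e2.
- move=> y; split.
  + move=> Hy. have [x [[Sx Px] _]] := Hu _ _ Hy.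
    have [i Ei] : exists i, f i = x by apply/fP.
    by exists i; rewrite Ei.
  + move=> [i <-]. rewrite Hc. congr shift. by apply/fP; exists i.
Qed.

Lemma bwd (A : finType) (phi : seqs A -> seqs A) k w :
  star_commute phi (@shift A) -> Zk phi k (shift w) -> Zk phi k w.
Proof.
move=> [Hc Hu] [g [ginj gP]].
have H : forall i, exists x, shift x = g i /\ phi x = w.
  move=> i. have Hg : phi (g i) = shift w by apply/gP; exists i.
  by have [x [[? ?] _]] := Hu _ _ Hg; exists x.
pose f i := proj1_sig (constructive_indefinite_description _ (H i)).
have fP i : shift (f i) = g i /\ phi (f i) = w.
  exact: proj2_sig (constructive_indefinite_description _ (H i)).
exists f; split.
- move=> i j Eij. apply: ginj.
  by rewrite -(fP i).1 -(fP j).1 Eij.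
- move=> x; split.
  + move=> Px.
    have Hs : phi (shift x) = shift w by rewrite Hc Px.
    have [i Ei] : exists i, g i = shift x by apply/gP.
    exists i.
    have Hg : phi (g i) = shift w by rewrite Ei.
    have [z [_ Uz]] := Hu _ _ Hg.
    have e1 := Uz (f i) (fP i).
    have e2 := Uz x (conj (esym Ei) Px).
    by rewrite e1 e2.
  + by move=> [i <-]; exact: (fP i).2.
Qed.

Theorem proposition5p4 (A : finType) (phi : seqs A -> seqs A) :
  star_commute phi (@shift A) ->
  forall k : nat, 0 < k ->
    forall y : seqs A,
      Zk phi k y <-> exists w : seqs A, Zk phi k w /\ shift w = y.
Proof.
move=> Hs k _ y; split.
- move=> Hy.
  pose w : seqs A := fun n => match n with 0 => y 0 | m.+1 => y m end.
  have Ew : shift w = y by apply: erefl.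
  exists w; split=> //; apply: bwd => //; by rewrite Ew.
- by move=> [w [Hw <-]]; apply: fwd.
Qed.
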